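(* Fix real numbers $w>0$ and $c>0$. For each integer $n\ge 3$, let $T_n$ be a binary phylogenetic tree with leaf set $X_n$, $|X_n|=n$, with positive edge lengths and minimum interior edge length $w$, and let $d_n$ be its tree metric. Let $\delta_n(x,y)=d_n(x,y)+\epsilon_{xy}$ for unordered pairs $\{x,y\}\subseteq X_n$, $x\ne y$, where the $\epsilon_{xy}$ are independent normal random variables with mean $0$ and variance $\sigma_n^2=c^2/\log(n)$. Let $P_n$ be the probability that $|\delta_n(x,y)-d_n(x,y)|<\frac{1}{2}w$ holds simultaneously for all pairs of distinct $x,y\in X_n$. Then $P_n\to 0$ as $n\to\infty$ if $c>\frac{1}{4}w$, and $P_n\to 1$ as $n\to\infty$ if $c<\frac14 w$.
   Context: A phylogenetic $X$-tree is a tree whose leaves are bijectively labelled by $X$ and whose interior vertices have degree at least 3; it is binary if all interior vertices have degree 3. Given positive edge lengths, the tree metric $d$ assigns to each pair of leaves the total length of the path between them. An interior edge is an edge not incident to a leaf. $\log$ denotes the natural logarithm. *)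

(* Defs.v *)
From HB Require Import structures.
From mathcomp Require Import all_boot all_order all_algebra.
From mathcomp Require Import all_classical all_reals all_analysis.
Set Implicit Arguments. Unset Strict Implicit. Unset Printing Implicit Defensive.
Import Order.TTheory GRing.Theory Num.Theory.
Local Open Scope classical_set_scope.
Local Open Scope ring_scope.

Definition deg (V : finType) (e : rel V) (v : V) : nat := #|[set u | e v u]|.

Definition is_tree (V : finType) (e : rel V) : Prop :=
  [/\ symmetric e, irreflexive e, (forall x y : V, connect e x y) &
      (forall p : seq V, uniq p -> (3 <= size p)%N -> ~~ cycle e p)].

(* Binary phylogenetic X-tree with X = 'I_n: the labelling phi : 'I_n -> V is
   a bijection onto the leaves (degree-1 vertices), every interior
   (non-leaf) vertex has degree 3. *)
Definition binary_phylo_tree (n : nat) (V : finType) (e : rel V)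
    (phi : 'I_n -> V) : Prop :=
  [/\ is_tree e, injective phi,
      (forall v, (v \in codom phi) = (deg e v == 1%N)) &
      (forall v, v \notin codom phi -> deg e v = 3%N)].

Definition interior_edge (V : finType) (e : rel V) (u v : V) : bool :=
  [&& e u v, deg e u != 1%N & deg e v != 1%N].

Definition positive_edge_lengths (R : realType) (V : finType) (e : rel V)
    (l : V -> V -> R) : Prop :=
  forall u v, e u v -> l u v = l v u /\ 0 < l u v.

Definition min_interior_edge_length (R : realType) (V : finType) (e : rel V)
    (l : V -> V -> R) (w : R) : Prop :=
  (forall u v, interior_edge e u v -> w <= l u v) /\
  ((exists u v, interior_edge e u v) ->
     exists u v, interior_edge e u v /\ l u v = w).

Definition walk_length (R : realType) (V : finType) (l : V -> V -> R)
    (x : V) (p : seq V) : R :=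
  \sum_(k <- zip (x :: p) p) l k.1 k.2.

(* d is the tree metric: d x y is the total length of the (unique) path
   between the leaves labelled x and y. *)
Definition is_tree_metric (R : realType) (n : nat) (V : finType) (e : rel V)
    (phi : 'I_n -> V) (l : V -> V -> R) (d : 'I_n -> 'I_n -> R) : Prop :=
  forall (x y : 'I_n) (p : seq V),
    path e (phi x) p -> last (phi x) p = phi y -> uniq (phi x :: p) ->
    d x y = walk_length l (phi x) p.

Definition mutually_independent (R : realType) (d : measure_display)
    (T : measurableType d) (P : probability T R) (I : finType) (J : {set I})
    (X : I -> T -> R) : Prop :=
  forall (F : {set I}) (B : I -> set R),
    F \subset J -> (forall i, measurable (B i)) ->
    P (\bigcap_(i in [set` F]) (X i @^-1` B i)) =
      (\prod_(i in F) P (X i @^-1` B i))%E.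

(* Main.v *)
Require Import Defs.
From HB Require Import structures.
From mathcomp Require Import all_boot all_order all_algebra.
From mathcomp Require Import all_classical all_reals all_analysis.
From mathcomp Require Import ring lra zify measurable_realfun.
Import Order.TTheory GRing.Theory Num.Theory numFieldNormedType.Exports.
Local Open Scope classical_set_scope.
Local Open Scope ring_scope.
Set Implicit Arguments. Unset Strict Implicit.

Lemma ln_cvgy (R : realType) (l : R) : 0 < l ->
  (l * ln (n%:R : R)) @[n --> \oo] --> +oo.
Proof.
move=> l0; apply/cvgryPge => A.
have := cvgr_idn (R:=R); move/cvgryPge => /(_ (expR (A / l))).
apply: filterS => n hn.
have n0 : 0 < (n%:R : R) by apply: lt_le_trans hn; exact: expR_gt0.
rewrite -ler_pdivrMl// -ler_expR lnK ?posrE// mulrC.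
by [].
Qed.

Lemma expR_ln_cvg0 (R : realType) (l : R) : 0 < l ->
  expR (- (l * ln (n%:R : R))) @[n --> \oo] --> 0.
Proof.
move=> l0.
have := cvg_comp _ _ (ln_cvgy l0) (@cvgr_expR R).
move=> h; apply: h.
Qed.

Lemma peak_scale (R : realType) (k s : R) : 0 < k ->
  normal_peak (k * s) = k^-1 * normal_peak s.
Proof.
move=> k0; rewrite /normal_peak -invfM; congr (_^-1).
rewrite (_ : (k * s) ^+ 2 * pi *+ 2 = k ^+ 2 * (s ^+ 2 * pi *+ 2)); last by ring.
by rewrite sqrtrM ?sqr_ge0// sqrtr_sqr ger0_norm ?ltW.
Qed.

Lemma tail_ub (R : realType) (s a k : R) : 0 < s -> 0 < a -> 1 < k ->
  (normal_prob 0 s (~` `](-a)%R, a[) <=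
    (k * expR (- ((1 - (k^+2)^-1) * (a^+2 / (s^+2 *+ 2)))))%:E)%E.
Proof.
move=> s0 a0 k1.
have k0 : 0 < k by lra.
set E := k * expR _.
have E0 : 0 <= E by rewrite mulr_ge0 ?expR_ge0// ltW.
have mA : measurable (~` `]-a, a[ : set R) by apply: measurableC.
rewrite /normal_prob.
apply: (@le_trans _ _ (\int[lebesgue_measure]_(x in ~` `](-a)%R, a[) (E%:E * (normal_pdf 0 (k * s) x)%:E))%E).
  apply: ge0_le_integral => //.
  - by move=> x _; rewrite lee_fin normal_pdf_ge0.
  - by apply/measurable_EFinP/measurable_funTS; exact: measurable_normal_pdf.
  - apply: emeasurable_funM => //; apply/measurable_EFinP/measurable_funTS.
    exact: measurable_normal_pdf.
  move=> x /= hx.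
  have hx2 : a ^+ 2 <= x ^+ 2.
    move: hx; rewrite in_itv /= => /negP; rewrite negb_and -!leNgt => /orP[]; nra.
  rewrite -EFinM lee_fin.
  rewrite !normal_pdfE ?gt_eqF ?mulr_gt0// peak_scale// /E /normal_fun.
  have kk : forall u v w : R, k * u * (k^-1 * v * w) = v * (u * w).
    by move=> u v w; field; rewrite gt_eqF.
  rewrite kk ler_pM2l ?normal_peak_gt0 ?gt_eqF// -expRD ler_expR !subr0.
  rewrite -subr_ge0.
  have k2 : (k ^+ 2)^-1 <= 1 by rewrite invf_le1 ?exprn_gt0// expr_ge1 ?ltW.
  set t := x ^+ 2 in hx2 *.
  have -> : - ((1 - k ^- 2) * (a ^+ 2 / (s ^+ 2 *+ 2))) + - t / ((k * s) ^+ 2 *+ 2) -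
     - t / (s ^+ 2 *+ 2) = (1 - (k ^+ 2)^-1) * (t - a ^+ 2) / (s ^+ 2 *+ 2).
    by field; rewrite ?gt_eqF.
  by apply: divr_ge0; [apply: mulr_ge0; lra | rewrite mulrn_wge0 ?sqr_ge0].
rewrite ge0_integralZl_EFin //; last 2 first.
- by move=> x _; rewrite lee_fin normal_pdf_ge0.
- by apply/measurable_EFinP/measurable_funTS; exact: measurable_normal_pdf.
rewrite -[leRHS]mule1; apply: lee_wpmul2l; first by rewrite lee_fin.
exact: (probability_le1 (normal_prob 0 (k * s)) mA).
Qed.

Lemma tail_lb (R : realType) (s a b : R) : 0 < s -> 0 <= a -> a < b ->
  (((b - a) * (normal_peak s * expR (- b ^+ 2 / (s ^+ 2 *+ 2))))%:E <=
     normal_prob 0 s (~` `](-a)%R, a[))%E.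
Proof.
move=> s0 a0 ab.
set C := normal_peak s * _.
have C0 : 0 <= C by rewrite mulr_ge0 ?normal_peak_ge0 ?expR_ge0.
apply: (@le_trans _ _ (normal_prob 0 s `[a, b])); last first.
  apply: le_measure; rewrite ?inE; [exact: measurable_itv| apply: measurableC; exact: measurable_itv|].
  move=> x /= /[!in_itv] /= /andP[ax _] /andP[_ xa]; lra.
rewrite /normal_prob.
apply: (@le_trans _ _ (\int[lebesgue_measure]_(x in `[a, b]) cst C%:E x)%E).
  rewrite integral_cst //= lebesgue_measure_itv /= lte_fin ab -EFinD -EFinM mulrC.
  by [].
apply: ge0_le_integral => //.
- by apply/measurable_EFinP/measurable_funTS; exact: measurable_normal_pdf.
move=> x /=; rewrite in_itv /= => /andP[ax xb].
rewrite lee_fin normal_pdfE ?gt_eqF// /C /normal_fun ler_pM2l ?normal_peak_gt0 ?gt_eqF//.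
rewrite ler_expR subr0 !mulNr lerN2 ler_pM2r ?invr_gt0 ?mulrn_wgt0 ?exprn_gt0//.
nra.
Qed.

Lemma Pn_eq (R : realType) (dT : measure_display) (T : measurableType dT)
  (P : probability T R) (n : nat) (eps : 'I_n * 'I_n -> {RV P >-> R})
  (dist : 'I_n -> 'I_n -> R) (w s : R) :
  mutually_independent P [set p : 'I_n * 'I_n | (p.1 < p.2)%N]%SET
       (fun p => (eps p : T -> R)) ->
  (forall p : 'I_n * 'I_n, (p.1 < p.2)%N -> distribution P (eps p) = normal_prob 0 s) ->
  P (\bigcap_(p in [set p : 'I_n * 'I_n | (p.1 < p.2)%N])
           [set t | `| (dist p.1 p.2 + eps p t) - dist p.1 p.2 | < w / 2]) =
  (\prod_(p in [set p : 'I_n * 'I_n | (p.1 < p.2)%N]%SET)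
     normal_prob 0 s `](- (w / 2))%R, (w / 2)%R[)%E.
Proof.
move=> hind hdist.
set A := [set p : 'I_n * 'I_n | (p.1 < p.2)%N]%SET.
set B : set R := `](- (w / 2))%R, (w / 2)%R[%classic.
have := hind A (fun _ => B) (subxx _) (fun _ => measurable_itv _).
move=> h.
transitivity (P (\bigcap_(i in [set` A]) ((eps i : T -> R) @^-1` B))).
  congr (P _); apply/seteqP; split=> t /=.
  - move=> H i; rewrite /= inE => hi; have := H i hi.
    move=> /= hh; rewrite /B /= in_itv /= -ltr_norml; move: hh.
    by rewrite addrAC subrr add0r.
  - move=> H i hi; have := H i; rewrite /= inE => /(_ hi).
    rewrite /B /= in_itv /= -ltr_norml => hh /=.
    by rewrite addrAC subrr add0r.
rewrite h; apply: eq_bigr => i; rewrite inE => hi.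
by rewrite -(hdist i hi).
Qed.

Lemma cardA_lb n : (n * n <= 2 * #|[set p : 'I_n * 'I_n | (p.1 < p.2)%N]%SET| + n)%N.
Proof.
set A := [set p : 'I_n * 'I_n | (p.1 < p.2)%N]%SET.
have hs : ([set: 'I_n * 'I_n] \subset
   (A :|: [set (p.2, p.1) | p in A]) :|: [set (i, i) | i : 'I_n])%SET.
  apply/fintype.subsetP => -[i j] _.
  case: (ltngtP i j) => h.
  - by rewrite !inE h.
  - apply/setUP; left; apply/setUP; right; apply/imsetP; exists (j, i) => //.
    by rewrite inE.
  - apply/setUP; right; apply/imsetP; exists i => //.
    by rewrite (ord_inj h).
have := subset_leq_card hs; rewrite cardsT card_prod !card_ord => h.
apply: leq_trans h _.
apply: leq_trans (leq_card_setU _ _) _.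
apply: leq_add; last by apply: leq_trans (leq_imset_card _ _) _; rewrite card_ord.
apply: leq_trans (leq_card_setU _ _) _.
by rewrite mul2n -addnn leq_add2l leq_imset_card.
Qed.

Lemma cardA_ub n : (#|[set p : 'I_n * 'I_n | (p.1 < p.2)%N]%SET| <= n * n)%N.
Proof. by apply: leq_trans (max_card _) _; rewrite card_prod !card_ord. Qed.

Lemma bern (R : realType) (s : R) (N : nat) : 0 <= s <= 1 ->
  1 - N%:R * s <= (1 - s) ^+ N.
Proof.
move=> /andP[s0 s1]; elim: N => [|N IH]; first by rewrite mul0r subr0 expr0.
rewrite exprS.
apply: le_trans (_ : (1 - s) * (1 - N%:R * s) <= _); last first.
  by apply: ler_wpM2l; rewrite ?subr_ge0.
have hN : 0 <= (N%:R : R) by [].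
rewrite -natr1; nra.
Qed.

Lemma pow_expR (R : realType) (s : R) (N : nat) : 0 <= s <= 1 ->
  (1 - s) ^+ N <= expR (- (N%:R * s)).
Proof.
move=> /andP[s0 s1]; elim: N => [|N IH]; first by rewrite mul0r oppr0 expR0 expr0.
rewrite -natr1 mulrDl mul1r opprD expRD exprS mulrC.
apply: ler_pM => //; first by rewrite exprn_ge0// subr_ge0.
  by rewrite subr_ge0.
by have := expR_ge1Dx (- s); rewrite addrC.
Qed.

Lemma up_case (R : realType) (s : nat -> R) (N : nat -> nat) (k mu : R) :
  0 < mu ->
  (\forall n \near \oo, 0 <= s n <= 1 /\ (N n)%:R * s n <= k * expR (- (mu * ln (n%:R : R)))) ->
  (fun n => (1 - s n) ^+ N n) @ \oo --> (1 : R).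
Proof.
move=> mu0 hev.
apply: (@squeeze_cvgr _ _ _ _ (fun n => 1 - k * expR (- (mu * ln (n%:R : R)))) (fun=> 1)).
- apply: filterS hev => n [hs hN]; apply/andP; split.
    by apply: le_trans (bern _ hs); rewrite lerB.
  by rewrite exprn_ile1 // ?subr_ge0 ?lerBlDr ?lerDl; case/andP: hs.
- rewrite -[X in _ --> X]subr0; apply: cvgB; first exact: cvg_cst.
  rewrite -(mulr0 k); apply: cvgMr; exact: expR_ln_cvg0.
- exact: cvg_cst.
Qed.

Lemma low_case (R : realType) (s : nat -> R) (N : nat -> nat) (lam : R) :
  0 < lam ->
  (\forall n \near \oo, 0 <= s n <= 1 /\ lam * ln (n%:R : R) <= (N n)%:R * s n) ->
  (fun n => (1 - s n) ^+ N n) @ \oo --> (0 : R).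
Proof.
move=> l0 hev.
apply: (@squeeze_cvgr _ _ _ _ (fun=> 0) (fun n => expR (- (lam * ln (n%:R : R))))).
- apply: filterS hev => n [hs hN]; apply/andP; split.
    by rewrite exprn_ge0 // subr_ge0; case/andP: hs.
  apply: le_trans (pow_expR _ hs) _.
  by rewrite ler_expR lerN2.
- exact: cvg_cst.
- exact: expR_ln_cvg0.
Qed.

Lemma Pn_form (R : realType) (dT : measure_display) (T : measurableType dT)
  (P : probability T R) (n : nat) (eps : 'I_n * 'I_n -> {RV P >-> R})
  (dist : 'I_n -> 'I_n -> R) (w sg : R) :
  mutually_independent P [set p : 'I_n * 'I_n | (p.1 < p.2)%N]%SET
       (fun p => (eps p : T -> R)) ->
  (forall p : 'I_n * 'I_n, (p.1 < p.2)%N -> distribution P (eps p) = normal_prob 0 sg) ->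
  exists s : R,
  P (\bigcap_(p in [set p : 'I_n * 'I_n | (p.1 < p.2)%N])
           [set t | `| (dist p.1 p.2 + eps p t) - dist p.1 p.2 | < w / 2]) =
  ((1 - s) ^+ #|[set p : 'I_n * 'I_n | (p.1 < p.2)%N]%SET|)%:E /\ 0 <= s <= 1 /\
  s%:E = normal_prob 0 sg (~` `](- (w / 2))%R, (w / 2)%R[).
Proof.
move=> hind hdist.
rewrite (Pn_eq _ _ hind hdist).
set B : set R := `](- (w / 2))%R, (w / 2)%R[%classic.
have mB : measurable B by exact: measurable_itv.
have hB : normal_prob 0 sg B = (fine (normal_prob 0 sg B))%:E.
  rewrite fineK // ge0_fin_numE ?measure_ge0 //.
  exact: le_lt_trans (probability_le1 (normal_prob 0 sg) mB) (ltry _).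
set q := fine (normal_prob 0 sg B) in hB.
have q01 : 0 <= q <= 1.
  have h0 : (0 <= q%:E)%E by rewrite -hB; exact: measure_ge0.
  have h1 : (q%:E <= 1)%E by rewrite -hB; exact: probability_le1.
  by rewrite !lee_fin in h0 h1; rewrite h0 h1.
exists (1 - q); split; last split.
- under eq_bigr do rewrite hB.
  rewrite prodEFin prodr_const; congr (_%:E); congr (_ ^+ _).
  by rewrite opprB addrC subrK.
- by case/andP: q01 => ? ?; apply/andP; split; lra.
- have hC : normal_prob 0 sg (~` B) = (1 - normal_prob 0 sg B)%E := probability_setC (normal_prob 0 sg) mB.
  by rewrite hC hB.
Qed.

Lemma ev_ge (m : nat) : \forall n \near \oo, (m <= n)%N.
Proof. by exists m. Qed.

Lemma sg_sqr (R : realType) (c : R) (n : nat) : (3 <= n)%N ->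
  0 < ln (n%:R : R) /\ Num.sqrt (c ^+ 2 / ln (n%:R : R)) ^+ 2 = c ^+ 2 / ln (n%:R : R).
Proof.
move=> n3.
have L0 : 0 < ln (n%:R : R) by apply: ln_gt0; rewrite ltr1n; apply: leq_trans n3.
by split => //; rewrite sqr_sqrtr // divr_ge0 ?sqr_ge0 // ltW.
Qed.

Lemma nsq (R : realType) (n : nat) : (0 < n)%N ->
  ((n * n)%:R : R) = expR (ln (n%:R : R) + ln (n%:R : R)).
Proof.
by move=> n0; rewrite expRD lnK ?posrE ?ltr0n // natrM.
Qed.

Lemma main_up (R : realType) (w c : R) (s : nat -> R) (N : nat -> nat) :
  0 < w -> 0 < c -> c < w / 4 ->
  (forall n, (3 <= n)%N -> 0 <= s n <= 1 /\
     (s n)%:E = normal_prob 0 (Num.sqrt (c ^+ 2 / ln (n%:R : R)))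
                  (~` `](- (w / 2))%R, (w / 2)%R[)) ->
  (forall n, (N n <= n * n)%N) ->
  (fun n => (1 - s n) ^+ N n) @ \oo --> (1 : R).
Proof.
move=> w0 c0 cw hs hN.
set al := (w / 2) ^+ 2 / (c ^+ 2 *+ 2).
have al2 : 2 < al.
  rewrite /al ltr_pdivlMr ?mulrn_wgt0 ?exprn_gt0 // mulr2n.
  have h2 : 2 * c < w / 2 by lra.
  move: h2; set w2 := w / 2 => h2; nra.
set u := al - 2.
have u0 : 0 < u by rewrite /u subr_gt0.
set k := 1 + al / u.
have k1 : 1 < k by rewrite /k ltrDl divr_gt0 //; lra.
have hk : al * (k ^+ 2)^-1 < u.
  rewrite ltr_pdivrMr ?exprn_gt0 //; last lra.
  have -> : u * k ^+ 2 = u + 2 * al + al ^+ 2 / u by rewrite /k; field; rewrite gt_eqF.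
  have : 0 <= al ^+ 2 / u by rewrite divr_ge0 ?sqr_ge0 ?ltW.
  lra.
set mu := u - al * (k ^+ 2)^-1.
apply: (@up_case _ s N k mu); first by rewrite /mu subr_gt0.
apply: filterS (ev_ge 3) => n n3.
have [L0 hsq] := sg_sqr c n3.
have [s01 hsn] := hs n n3.
split => //.
have sg0 : 0 < Num.sqrt (c ^+ 2 / ln (n%:R : R)) by rewrite sqrtr_gt0 divr_gt0 ?exprn_gt0.
have w20 : 0 < w / 2 by rewrite divr_gt0.
have := tail_ub sg0 w20 k1; rewrite -hsn lee_fin hsq.
set L := ln (n%:R : R) in L0 hsq *.
have -> : (w / 2) ^+ 2 / (c ^+ 2 / L *+ 2) = al * L.
  by rewrite /al; field; rewrite ?gt_eqF.
move=> hsk.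
have s0 : 0 <= s n by case/andP: s01.
apply: (@le_trans _ _ ((n * n)%:R * (k * expR (- ((1 - (k ^+ 2)^-1) * (al * L)))))).
  apply: ler_pM => //; by rewrite ler_nat.
rewrite nsq ?(leq_trans _ n3) // mulrCA -expRD.
apply: ler_wpM2l; first lra.
rewrite ler_expR.
rewrite [X in X <= _](_ : _ = - (mu * L)) //.
by rewrite -/L /mu /u; ring.
Qed.

Lemma nat4 n M : (3 <= n)%N -> (n * n <= 2 * M + n)%N -> (n * n <= M * 4)%N.
Proof. move=> h1 h2; nia. Qed.

Lemma main_low (R : realType) (w c : R) (s : nat -> R) (N : nat -> nat) :
  0 < w -> 0 < c -> w / 4 < c ->
  (forall n, (3 <= n)%N -> 0 <= s n <= 1 /\
     (s n)%:E = normal_prob 0 (Num.sqrt (c ^+ 2 / ln (n%:R : R)))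
                  (~` `](- (w / 2))%R, (w / 2)%R[)) ->
  (forall n, (n * n <= 2 * N n + n)%N) ->
  (fun n => (1 - s n) ^+ N n) @ \oo --> (0 : R).
Proof.
move=> w0 c0 cw hs hN.
set a := w / 2.
have a0 : 0 < a by rewrite divr_gt0.
set al := a ^+ 2 / (c ^+ 2 *+ 2).
have al0 : 0 < al by rewrite divr_gt0 ?mulrn_wgt0 ?exprn_gt0.
have al2 : al < 2.
  rewrite /al ltr_pdivrMr ?mulrn_wgt0 ?exprn_gt0 // mulr2n.
  have h2 : a < 2 * c by rewrite /a; lra.
  nra.
set r := 4 / (2 + al).
have r1 : 1 < r by rewrite /r ltr_pdivlMr; lra.
set be := r ^+ 2 * al.
have be2 : be < 2.
  have al20 : 2 + al != 0 by rewrite gt_eqF //; lra.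
  rewrite /be /r (_ : (4 / (2 + al)) ^+ 2 * al = (16 * al) / (2 + al) ^+ 2); last by field.
  rewrite ltr_pdivrMr ?exprn_gt0 //; last lra.
  have : 0 < (al - 2) ^+ 2 by rewrite exprn_even_gt0 //= subr_eq0 lt_eqF.
  nra.
set b := r * a.
have ab : a < b by rewrite /b ltr_pMl.
set Kc := (r - 1) * a * normal_peak c.
have r10 : 0 < r - 1 by rewrite subr_gt0.
have Kc0 : 0 < Kc by rewrite /Kc !mulr_gt0 ?normal_peak_gt0 ?gt_eqF.
set lam := Kc / 4 * (2 - be).
have lam0 : 0 < lam.
  by apply: mulr_gt0; [apply: divr_gt0 | rewrite subr_gt0].
apply: (@low_case _ s N lam lam0).
have hL1 : \forall n \near \oo, 1 <= 1 * ln (n%:R : R).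
  by have := ln_cvgy (@ltr01 R); move/cvgryPge; apply.
apply: filterS2 (ev_ge 3) hL1 => n n3; rewrite mul1r => L1.
have [L0 hsq] := sg_sqr c n3.
have [s01 hsn] := hs n n3.
split => //.
have sg0 : 0 < Num.sqrt (c ^+ 2 / ln (n%:R : R)) by rewrite sqrtr_gt0 divr_gt0 ?exprn_gt0.
have := tail_lb sg0 (ltW a0) ab; rewrite -hsn lee_fin hsq.
have hpk : normal_peak c <= normal_peak (Num.sqrt (c ^+ 2 / ln (n%:R : R))).
  rewrite /normal_peak lef_pV2 ?posrE ?sqrtr_gt0 ?mulrn_wgt0 ?mulr_gt0 ?exprn_gt0 ?pi_gt0 //.
  rewrite ler_sqrt ?mulrn_wge0 ?mulr_ge0 ?sqr_ge0 ?pi_ge0 //.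
  rewrite -[X in X * pi *+ 2 <= _]/(Num.sqrt (c ^+ 2 / ln (n%:R : R)) ^+ 2) hsq.
    rewrite ler_pMn2r // ler_pM2r ?pi_gt0 // ler_pdivrMr // ler_peMr // sqr_ge0.
    all: try done; try lra.
set L := ln (n%:R : R) in L0 hsq hpk L1 *.
have -> : - b ^+ 2 / (c ^+ 2 / L *+ 2) = - (be * L).
  by rewrite /be /b /al; field; rewrite ?gt_eqF.
move=> hsl.
have s0 : 0 <= s n by case/andP: s01.
apply: (@le_trans _ _ (Kc / 4 * expR ((2 - be) * L))).
  rewrite /lam -[_ * L]mulrA; apply: ler_wpM2l; first by rewrite divr_ge0 ?ltW.
  have := expR_ge1Dx ((2 - be) * L); lra.
apply: (@le_trans _ _ ((n * n)%:R / 4 * (Kc * expR (- (be * L))))).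
  rewrite nsq ?(leq_trans _ n3) // -/L.
  rewrite (_ : (2 - be) * L = (L + L) + - (be * L)); last by ring.
  rewrite expRD le_eqVlt; apply/orP; left; apply/eqP; ring.
apply: (@le_trans _ _ ((N n)%:R * (Kc * expR (- (be * L))))).
  apply: ler_wpM2r; first by rewrite mulr_ge0 ?expR_ge0 ?ltW.
  have h4 : (n * n <= N n * 4)%N by apply: nat4.
  rewrite ler_pdivrMr // natrM; move: h4; rewrite -(ler_nat R) !natrM; exact.
apply: ler_wpM2l => //.
apply: le_trans hsl.
have -> : b - a = (r - 1) * a by rewrite /b; ring.
rewrite /Kc -mulrA.
apply: ler_wpM2l; first by rewrite mulr_ge0 ?ltW.
by apply: ler_wpM2r; rewrite ?expR_ge0.
Qed.

Theorem proposition1 (R : realType) (w c : R)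
  (V : nat -> finType) (e : forall n, rel (V n))
  (phi : forall n, 'I_n -> V n) (l : forall n, V n -> V n -> R)
  (dist : forall n, 'I_n -> 'I_n -> R)
  (dT : measure_display) (T : nat -> measurableType dT)
  (P : forall n, probability (T n) R)
  (eps : forall n, 'I_n * 'I_n -> {RV P n >-> R}) :
  0 < w -> 0 < c ->
  (forall n, (3 <= n)%N -> binary_phylo_tree (e n) (phi n)) ->
  (forall n, (3 <= n)%N -> positive_edge_lengths (e n) (l n)) ->
  (forall n, (3 <= n)%N -> min_interior_edge_length (e n) (l n) w) ->
  (forall n, (3 <= n)%N -> is_tree_metric (e n) (phi n) (l n) (dist n)) ->
  (forall n, (3 <= n)%N ->
     mutually_independent (P n) [set p : 'I_n * 'I_n | (p.1 < p.2)%N]%SET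
       (fun p => (eps n p : T n -> R))) ->
  (forall n, (3 <= n)%N -> forall p : 'I_n * 'I_n, (p.1 < p.2)%N ->
     distribution (P n) (eps n p) =
       normal_prob 0 (Num.sqrt (c ^+ 2 / ln (n%:R : R)))) ->
  let Pn := fun n : nat =>
    P n (\bigcap_(p in [set p : 'I_n * 'I_n | (p.1 < p.2)%N])
           [set t | `| (dist n p.1 p.2 + eps n p t) - dist n p.1 p.2 | < w / 2]) in
  (w / 4 < c -> Pn @ \oo --> (0 : R)%:E) /\ (c < w / 4 -> Pn @ \oo --> (1 : R)%:E).
Proof.
move=> w0 c0 _ _ _ _ hind hdist Pn.
pose N n := #|[set p : 'I_n * 'I_n | (p.1 < p.2)%N]%SET|.
pose s n := fine (normal_prob 0 (Num.sqrt (c ^+ 2 / ln (n%:R : R)))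
                  (~` `](- (w / 2))%R, (w / 2)%R[)).
have hs : forall n, (3 <= n)%N ->
  Pn n = ((1 - s n) ^+ N n)%:E /\ 0 <= s n <= 1 /\
  (s n)%:E = normal_prob 0 (Num.sqrt (c ^+ 2 / ln (n%:R : R)))
                  (~` `](- (w / 2))%R, (w / 2)%R[).
  move=> n h.
  have [x [h1 [h2 h3]]] := Pn_form (dist n) w (hind n h) (hdist n h).
  have -> : s n = x by rewrite /s -h3.
  by split; [exact: h1| split].
have hs' : forall n, (3 <= n)%N -> 0 <= s n <= 1 /\
     (s n)%:E = normal_prob 0 (Num.sqrt (c ^+ 2 / ln (n%:R : R)))
                  (~` `](- (w / 2))%R, (w / 2)%R[).
  by move=> n n3; have [_ h] := hs n n3.
have hfin : \forall n \near \oo, Pn n \is a fin_num.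
  by apply: filterS (ev_ge 3) => n n3; rewrite (hs n n3).1.
have heq : \forall n \near \oo, (1 - s n) ^+ N n = (fine \o Pn) n.
  by apply: filterS (ev_ge 3) => n n3; rewrite /= (hs n n3).1.
split => hc; apply: cvg_EFin => //; apply: cvg_trans (near_eq_cvg heq) _.
- exact: (main_low w0 c0 hc hs' (fun n => cardA_lb n)).
- exact: (main_up w0 c0 hc hs' (fun n => cardA_ub n)).
Qed.
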